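(* Let $Y$ be a Young diagram with $n$ boxes and $Q$ a constant symmetric $n\times n$ matrix. Let $V_{Y;Q}(t)$ be the unique solution of $$\dot V=-\Gamma_1V-V\Gamma_1^T-Q-V\Gamma_2V,\qquad \lim_{t\to0^+}V^{-1}=0,$$ on its maximal interval of definition in $(0,+\infty)$. Then $V_{Y;Q}$ is monotone non-increasing, i.e. $\dot V_{Y;Q}(t)\le0$ (as a symmetric matrix) for all $t$ in that interval.
   Context: A Young diagram $Y$ has rows of lengths $n_1\ge\dots\ge n_k$, $\sum n_a=n$; boxes are labelled $ai$ with $a$ the row and $i=1,\dots,n_a$ the position in the row. $\Gamma_1=\Gamma_1(Y)$, $\Gamma_2=\Gamma_2(Y)$ are the $n\times n$ matrices indexed by boxes with $(\Gamma_1)_{ai,bj}=\delta_{ab}\delta_{i,j-1}$ and $(\Gamma_2)_{ai,bj}=\delta_{ab}\delta_{i1}\delta_{j1}$. The limit condition means $V(t)$ is invertible for small $t>0$ and $V(t)^{-1}\to0$ as $t\to0^+$; such a solution exists and is unique. *)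

(* Defs.v *)
From HB Require Import structures.
From mathcomp Require Import all_boot all_order all_algebra.
From mathcomp Require Import all_classical all_reals all_analysis.
Set Implicit Arguments. Unset Strict Implicit. Unset Printing Implicit Defensive.
Import Order.TTheory GRing.Theory Num.Theory.
Import numFieldNormedType.Exports.
Local Open Scope classical_set_scope.
Local Open Scope ring_scope.

(* A Young diagram is given by its sequence of row lengths [s = [:: n_1; ...; n_k]],
   with n_1 >= ... >= n_k >= 1.  It has n = sumn s boxes.  The boxes are enumerated
   row by row: box p : 'I_(sumn s) lies in row [box_row s p] (0-based) at position
   [box_pos s p] (0-based) in that row. *)
Definition young_diagram (s : seq nat) : bool :=
  sorted geq s && all (fun m => 0 < m)%N s.

Definition box_row (s : seq nat) (p : nat) : nat := reshape_index s p.
Definition box_pos (s : seq nat) (p : nat) : nat := reshape_offset s p.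

Section Gammas.
Variable R : realType.
Variable s : seq nat.

(* (Gamma_1)_{ai,bj} = delta_{ab} delta_{i,j-1} *)
Definition Gamma1 : 'M[R]_(sumn s) :=
  \matrix_(p, q) ((box_row s p == box_row s q) &&
                  ((box_pos s p).+1 == box_pos s q))%:R.

(* (Gamma_2)_{ai,bj} = delta_{ab} delta_{i1} delta_{j1} (first box = offset 0) *)
Definition Gamma2 : 'M[R]_(sumn s) :=
  \matrix_(p, q) [&& box_row s p == box_row s q,
                     box_pos s p == 0%N & box_pos s q == 0%N]%:R.

Definition mxderiv (V : R -> 'M[R]_(sumn s)) (t : R) : 'M[R]_(sumn s) :=
  \matrix_(i, j) derive1 (fun u => V u i j) t.

Definition riccati_sol (Q : 'M[R]_(sumn s)) (T : \bar R)
    (V : R -> 'M[R]_(sumn s)) : Prop :=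
  (0%:E < T)%E /\
  (forall t, 0 < t -> (t%:E < T)%E ->
     forall i j, derivable (fun u => V u i j) t 1 /\
       derive1 (fun u => V u i j) t =
         (- (Gamma1 *m V t) - V t *m Gamma1^T - Q - V t *m Gamma2 *m V t) i j) /\
  (\forall t \near 0^'+, V t \in unitmx) /\
  (forall i j, (fun t => invmx (V t) i j) @ 0^'+ --> 0).

Definition riccati_maximal (Q : 'M[R]_(sumn s)) (T : \bar R)
    (V : R -> 'M[R]_(sumn s)) : Prop :=
  riccati_sol Q T V /\
  forall (T' : \bar R) (W : R -> 'M[R]_(sumn s)), riccati_sol Q T' W -> (T' <= T)%E.

Definition nsd (A : 'M[R]_(sumn s)) : Prop :=
  forall x : 'cV[R]_(sumn s), (x^T *m A *m x) 0 0 <= 0.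

End Gammas.

(* Main.v *)
Require Import Defs.
From HB Require Import structures.
From mathcomp Require Import all_boot all_order all_algebra.
From mathcomp Require Import all_classical all_reals all_analysis.
Import Order.TTheory GRing.Theory Num.Theory.
Import numFieldNormedType.Exports.
From mathcomp Require Import ring lra.

Module Helpers.
Local Open Scope ring_scope.

Local Open Scope classical_set_scope.
Set Implicit Arguments. Unset Strict Implicit.

Section A.
Variable R : realType.

Lemma cvg_sumfun (T : Type) (F : set_system T) {FF : Filter F}
  (I : Type) (r : seq I) (P : pred I) (f : I -> T -> R) (a : I -> R) :
  (forall i, P i -> f i x @[x --> F] --> a i) ->
  (\sum_(i <- r | P i) f i x) @[x --> F] --> \sum_(i <- r | P i) a i.
Proof.
move=> H; apply: cvg_big => //.
exact: add_continuous.
Qed.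

Lemma cvg_prodfun (T : Type) (F : set_system T) {FF : Filter F}
  (I : Type) (r : seq I) (P : pred I) (f : I -> T -> R) (a : I -> R) :
  (forall i, P i -> f i x @[x --> F] --> a i) ->
  (\prod_(i <- r | P i) f i x) @[x --> F] --> \prod_(i <- r | P i) a i.
Proof.
move=> H; apply: cvg_big => //.
exact: mul_continuous.
Qed.

Lemma is_derive_sumfun (I : finType) (P : pred I) (f : I -> R -> R) (df : I -> R) (t : R) :
  (forall i, is_derive t 1 (f i) (df i)) ->
  is_derive t 1 (fun u => \sum_(i | P i) f i u) (\sum_(i | P i) df i).
Proof.
move=> H; rewrite unlock /=.
elim: (index_enum I) => [|i r IH] /=.
  exact: is_derive_cst.
case: (P i) => //.
exact: is_deriveD.
Qed.

Lemma isdM (f g : R -> R) (df dg t : R) :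
  is_derive t 1 f df -> is_derive t 1 g dg ->
  is_derive t 1 (fun u => f u * g u) (f t * dg + g t * df).
Proof.
move=> H1 H2; have := is_deriveM H1 H2.
by have -> : (f * g) = (fun u => f u * g u) by apply/funext.
Qed.

Lemma isdD (f g : R -> R) (df dg t : R) :
  is_derive t 1 f df -> is_derive t 1 g dg ->
  is_derive t 1 (fun u => f u + g u) (df + dg).
Proof.
move=> H1 H2; have := is_deriveD H1 H2.
by have -> : (f + g) = (fun u => f u + g u) by apply/funext.
Qed.

Lemma isdN (f : R -> R) (df t : R) :
  is_derive t 1 f df -> is_derive t 1 (fun u => - f u) (- df).
Proof.
move=> H1; have := is_deriveN H1.
by have -> : (- f) = (fun u => - f u) by apply/funext.
Qed.

Lemma isdC (c t : R) : is_derive t 1 (fun _ => c) 0.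
Proof. exact: is_derive_cst. Qed.

Lemma isdI (t : R) : is_derive t 1 (fun u => u) 1.
Proof. exact: is_derive_id. Qed.

Lemma isd_eq (f : R -> R) (df df' t : R) : is_derive t 1 f df -> df = df' -> is_derive t 1 f df'.
Proof. by move=> ? <-. Qed.

Lemma is_derive_expRk (k t : R) :
  is_derive t 1 (fun u => expR (k * u)) (k * expR (k * t)).
Proof.
have dl : is_derive t 1 (fun u : R => k * u) k.
  by move: (isdM (isdC k t) (isdI t)); rewrite mulr1 mulr0 addr0.
have dlin : derivable (fun u : R => k * u) t 1 by case: dl.
have dexp : derivable (@expR R) (k * t) 1 by exact: derivable_expR.
apply: DeriveDef.
  apply/derivable1_diffP; apply: differentiable_comp; by apply/derivable1_diffP.
rewrite -derive1E.
rewrite (derive1_comp dlin dexp) mulrC.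
congr (_ * _).
  by rewrite derive1E (@derive_val _ _ _ _ _ _ _ dl).
by rewrite derive1E (@derive_val _ _ _ _ _ _ _ (is_derive_expR _)).
Qed.

End A.


Local Open Scope classical_set_scope.
Set Implicit Arguments. Unset Strict Implicit.

Section B.
Variable R : realType.

Definition mcvg m p (T : Type) (F : set_system T) (f : T -> 'M[R]_(m,p)) (M : 'M[R]_(m,p)) :=
  forall i j, (fun u => f u i j) @ F --> M i j.

Definition dmx m p (f : R -> 'M[R]_(m,p)) (D : 'M[R]_(m,p)) (t : R) :=
  forall i j, is_derive t 1 (fun u => f u i j) (D i j).

Section mcvg.
Context (T : Type) (F : set_system T) {FF : Filter F}.

Lemma mcvgC m p (M : 'M[R]_(m,p)) : mcvg F (fun _ => M) M.
Proof. by move=> i j; exact: cvg_cst. Qed.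

Lemma mcvgD m p (f g : T -> 'M[R]_(m,p)) M N :
  mcvg F f M -> mcvg F g N -> mcvg F (fun u => f u + g u) (M + N).
Proof.
move=> Hf Hg i j; rewrite mxE.
under eq_fun do rewrite mxE.
exact: cvgD.
Qed.

Lemma mcvgN m p (f : T -> 'M[R]_(m,p)) M :
  mcvg F f M -> mcvg F (fun u => - f u) (- M).
Proof.
move=> Hf i j; rewrite mxE.
under eq_fun do rewrite mxE.
exact: cvgN.
Qed.

Lemma mcvgB m p (f g : T -> 'M[R]_(m,p)) M N :
  mcvg F f M -> mcvg F g N -> mcvg F (fun u => f u - g u) (M - N).
Proof. by move=> Hf Hg; apply: mcvgD => //; exact: mcvgN. Qed.

Lemma mcvgT m p (f : T -> 'M[R]_(m,p)) M :
  mcvg F f M -> mcvg F (fun u => (f u)^T) M^T.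
Proof.
move=> Hf i j; rewrite mxE.
under eq_fun do rewrite mxE.
exact: Hf.
Qed.

Lemma mcvgM m p q (f : T -> 'M[R]_(m,p)) (g : T -> 'M[R]_(p,q)) M N :
  mcvg F f M -> mcvg F g N -> mcvg F (fun u => f u *m g u) (M *m N).
Proof.
move=> Hf Hg i j; rewrite mxE.
under eq_fun do rewrite mxE.
apply: cvg_sumfun => k _.
exact: cvgM.
Qed.

Lemma mcvgZ m p (c : T -> R) (f : T -> 'M[R]_(m,p)) (a : R) M :
  c @ F --> a -> mcvg F f M -> mcvg F (fun u => c u *: f u) (a *: M).
Proof.
move=> Hc Hf i j; rewrite mxE.
under eq_fun do rewrite mxE.
exact: cvgM.
Qed.

Lemma mcvg_det m (f : T -> 'M[R]_m) M :
  mcvg F f M -> \det (f u) @[u --> F] --> \det M.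
Proof.
move=> Hf; rewrite /determinant.
apply: cvg_sumfun => s _.
apply: cvgM; first exact: cvg_cst.
apply: cvg_prodfun => i _.
exact: Hf.
Qed.

Lemma mcvg_adj m (f : T -> 'M[R]_m) M :
  mcvg F f M -> mcvg F (fun u => \adj (f u)) (\adj M).
Proof.
move=> Hf i j; rewrite mxE.
under eq_fun do rewrite mxE.
rewrite /cofactor.
apply: cvgM; first exact: cvg_cst.
apply: mcvg_det => k l; rewrite !mxE.
under eq_fun do rewrite !mxE.
exact: Hf.
Qed.

End mcvg.

Lemma mcvg_inv (T : Type) (F : set_system T) {FF : ProperFilter F} m (f : T -> 'M[R]_m) M :
  mcvg F f M -> M \in unitmx -> mcvg F (fun u => invmx (f u)) (invmx M).
Proof.
move=> Hf HM.
have dM : \det M != 0 by rewrite -unitfE -unitmxE.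
have Hd : \det (f u) @[u --> F] --> \det M by exact: mcvg_det.
have Hnear : \forall u \near F, \det (f u) != 0.
  have : \forall u \near F, `|\det M| / 2 < `|\det (f u)|.
    apply: (@cvgr_gt _ _ _ _ (fun u => `|\det (f u)|) `|\det M|); first exact: (@cvg_norm R R^o _ _ _ _ _ Hd).
    by rewrite ltr_pdivrMr // ltr_pMr ?normr_gt0 // ltr1n.
  apply: filterS => u Hu; rewrite -normr_gt0; apply: le_lt_trans Hu.
  by rewrite divr_ge0.
move=> i j.
apply: (@cvg_trans _ ((fun u => ((\det (f u))^-1 *: \adj (f u)) i j) @ F)).
  apply: near_eq_cvg; apply: filterS Hnear => u Hu.
  by rewrite /invmx unitmxE unitfE Hu.
rewrite /invmx HM.
apply: (mcvgZ (cvgV dM Hd)).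
exact: mcvg_adj.
Qed.

Lemma dmx_cont m p (f : R -> 'M[R]_(m,p)) D t : dmx f D t -> mcvg (nbhs t) f (f t).
Proof.
move=> Hf i j.
have [Hd _] := Hf i j.
apply: differentiable_continuous.
by apply/derivable1_diffP.
Qed.

Lemma dmxC m p (M : 'M[R]_(m,p)) t : dmx (fun _ => M) 0 t.
Proof. by move=> i j; rewrite mxE; exact: is_derive_cst. Qed.

Lemma dmxD m p (f g : R -> 'M[R]_(m,p)) Df Dg t :
  dmx f Df t -> dmx g Dg t -> dmx (fun u => f u + g u) (Df + Dg) t.
Proof.
move=> Hf Hg i j; rewrite mxE.
have -> : (fun u => (f u + g u) i j) = (fun u => f u i j + g u i j).
  by apply/funext => u; rewrite mxE.
exact: isdD.
Qed.

Lemma dmxN m p (f : R -> 'M[R]_(m,p)) Df t :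
  dmx f Df t -> dmx (fun u => - f u) (- Df) t.
Proof.
move=> Hf i j; rewrite mxE.
have -> : (fun u => (- f u) i j) = (fun u => - f u i j).
  by apply/funext => u; rewrite mxE.
exact: isdN.
Qed.

Lemma dmxB m p (f g : R -> 'M[R]_(m,p)) Df Dg t :
  dmx f Df t -> dmx g Dg t -> dmx (fun u => f u - g u) (Df - Dg) t.
Proof. by move=> Hf Hg; apply: dmxD => //; exact: dmxN. Qed.

Lemma dmxT m p (f : R -> 'M[R]_(m,p)) Df t :
  dmx f Df t -> dmx (fun u => (f u)^T) Df^T t.
Proof.
move=> Hf i j; rewrite mxE.
have -> : (fun u => (f u)^T i j) = (fun u => f u j i).
  by apply/funext => u; rewrite mxE.
exact: Hf.
Qed.

Lemma dmxM m p q (f : R -> 'M[R]_(m,p)) (g : R -> 'M[R]_(p,q)) Df Dg t :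
  dmx f Df t -> dmx g Dg t ->
  dmx (fun u => f u *m g u) (Df *m g t + f t *m Dg) t.
Proof.
move=> Hf Hg i j.
have -> : (fun u => (f u *m g u) i j) = (fun u => \sum_k f u i k * g u k j).
  by apply/funext => u; rewrite mxE.
apply: (isd_eq (is_derive_sumfun _ (fun k => isdM (Hf i k) (Hg k j)))).
rewrite !mxE -big_split /=.
by apply: eq_bigr => k _; rewrite addrC [g t k j * _]mulrC.
Qed.

Lemma dmx_eq m p (f : R -> 'M[R]_(m,p)) D D' t : dmx f D t -> D = D' -> dmx f D' t.
Proof. by move=> ? <-. Qed.

End B.


Local Open Scope classical_set_scope.
Set Implicit Arguments. Unset Strict Implicit.

Section C.
Variable R : realType.
Variable n : nat.
Implicit Types (A B E : 'M[R]_n) (x y : 'cV[R]_n).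

Definition bil A x y : R := (x^T *m A *m y) 0 0.
Definition q A x : R := bil A x x.
Definition nx x : R := \sum_i x i 0 ^+ 2.
Definition sa A : R := \sum_i \sum_j `|A i j|.

Lemma bilE A x y : bil A x y = \sum_i \sum_j x i 0 * A i j * y j 0.
Proof.
rewrite /bil mxE; under eq_bigr => j _ do rewrite mxE big_distrl /=.
rewrite exchange_big /=; apply: eq_bigr => i _; apply: eq_bigr => j _.
by rewrite !mxE.
Qed.

Lemma nx_ge0 x : 0 <= nx x.
Proof. by apply: sumr_ge0 => i _; exact: sqr_ge0. Qed.

Lemma sa_ge0 A : 0 <= sa A.
Proof. by apply: sumr_ge0 => i _; apply: sumr_ge0 => j _. Qed.

Lemma sqr_le_nx x i : x i 0 ^+ 2 <= nx x.
Proof.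
rewrite /nx (bigD1 i) //= lerDl.
by apply: sumr_ge0 => k _; exact: sqr_ge0.
Qed.

Lemma absxx x i j : `|x i 0 * x j 0| <= nx x.
Proof.
rewrite normrM.
wlog H : i j / `|x i 0| <= `|x j 0|.
  move=> W; case: (lerP `|x i 0| `|x j 0|) => h; first exact: W.
  by rewrite mulrC; apply: W; exact: ltW.
apply: le_trans (sqr_le_nx x j).
rewrite -real_normK ?num_real // expr2.
by apply: ler_wpM2r => //.
Qed.

Lemma bil_bound A x : `|bil A x x| <= sa A * nx x.
Proof.
rewrite bilE /sa mulr_suml.
apply: le_trans (ler_norm_sum _ _ _) _.
apply: ler_sum => i _.
rewrite mulr_suml.
apply: le_trans (ler_norm_sum _ _ _) _.
apply: ler_sum => j _.
rewrite mulrAC normrM mulrC.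
by apply: ler_wpM2l => //; exact: absxx.
Qed.

Lemma q_bound A x : `|q A x| <= sa A * nx x.
Proof. exact: bil_bound. Qed.

Lemma nx_eq0 x : nx x = 0 -> x = 0.
Proof.
move=> H; apply/matrixP => i j; rewrite (ord1 j) mxE.
apply/eqP; rewrite -sqrf_eq0; apply/eqP/le_anti.
by rewrite sqr_ge0 andbT -H sqr_le_nx.
Qed.

Lemma nx_gt0 x : x != 0 -> 0 < nx x.
Proof.
move=> H; rewrite lt_def nx_ge0 andbT.
by apply/eqP => /nx_eq0 h; rewrite h eqxx in H.
Qed.

Lemma bilD A B x y : bil (A + B) x y = bil A x y + bil B x y.
Proof. by rewrite /bil mulmxDr mulmxDl mxE. Qed.

Lemma bilN A x y : bil (- A) x y = - bil A x y.
Proof. by rewrite /bil mulmxN mulNmx mxE. Qed.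

Lemma bilB A B x y : bil (A - B) x y = bil A x y - bil B x y.
Proof. by rewrite bilD bilN. Qed.

Lemma bilZ c A x y : bil (c *: A) x y = c * bil A x y.
Proof. by rewrite /bil -scalemxAr -scalemxAl mxE. Qed.

Lemma bilT A x y : bil A^T x y = bil A y x.
Proof.
rewrite /bil -[x^T *m A^T *m y]trmxK [in LHS]mxE !trmx_mul !trmxK.
by rewrite mulmxA.
Qed.

Lemma bil1 x : bil 1%:M x x = nx x.
Proof.
rewrite bilE /nx; apply: eq_bigr => i _.
rewrite (bigD1 i) //= big1 ?addr0; first by rewrite !mxE eqxx mulr1 expr2.
by move=> j /negbTE ij; rewrite !mxE eq_sym ij mulr0 mul0r.
Qed.

Lemma bil_linr A x y c : bil A x (c *: y) = c * bil A x y.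
Proof. by rewrite /bil -scalemxAr mxE. Qed.

Lemma bil_linl A x y c : bil A (c *: x) y = c * bil A x y.
Proof. by rewrite /bil linearZ /= -!scalemxAl mxE. Qed.

Lemma bilDr A x y z : bil A x (y + z) = bil A x y + bil A x z.
Proof. by rewrite /bil mulmxDr mxE. Qed.

Lemma bilDl A x y z : bil A (x + y) z = bil A x z + bil A y z.
Proof. by rewrite /bil linearD /= !mulmxDl mxE. Qed.

Lemma q_expand A x y c : q A (x + c *: y) =
  q A x + c * (bil A x y + bil A y x) + c ^+ 2 * q A y.
Proof.
rewrite /q bilDl !bilDr !bil_linl !bil_linr.
by rewrite expr2; ring.
Qed.


Lemma sa_tr A : sa A^T = sa A.
Proof.
rewrite /sa exchange_big /=; apply: eq_bigr => i _; apply: eq_bigr => j _.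
by rewrite mxE.
Qed.

Lemma bil_trx x : (x^T *m x) 0 0 = nx x.
Proof. by rewrite mxE /nx; apply: eq_bigr => i _; rewrite mxE expr2. Qed.

Lemma pd_unit E : E^T = E -> (forall x, 0 <= q E x) -> E \in unitmx ->
  forall x, nx x <= (sa (invmx E) + 1) * q E x.
Proof.
move=> Es Epsd Eu x.
set s := sa (invmx E); set K := s + 1.
have s0 : 0 <= s by exact: sa_ge0.
have K0 : 0 < K by rewrite /K ltr_wpDl.
set y := invmx E *m x.
have Exy : bil E x y = nx x.
  by rewrite /bil /y -mulmxA [E *m _]mulmxA mulmxV // mul1mx bil_trx.
have Eyx : bil E y x = nx x by rewrite -bilT Es.
have Eyy : q E y <= s * nx x.
  have -> : q E y = bil (invmx E)^T x x.
    rewrite /q /bil /y -mulmxA [E *m _]mulmxA mulmxV // mul1mx.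
    by rewrite trmx_mul.
  rewrite -/(q _ x); apply: le_trans (ler_norm _) _; apply: le_trans (q_bound _ _) _; by rewrite sa_tr.
have h := Epsd (x + (- K^-1) *: y).
rewrite q_expand Exy Eyx in h.
set a := nx x in h Eyy *; set Q := q E x in h *; set b := q E y in h Eyy.
have a0 : 0 <= a by exact: nx_ge0.
have h2 : 0 <= Q * K ^+ 2 - 2 * a * K + b.
  have := mulr_ge0 h (ltW (exprn_gt0 2 K0)).
  have Kn : K != 0 by rewrite gt_eqF.
  have -> : (Q + - K^-1 * (a + a) + (- K^-1) ^+ 2 * b) * K ^+ 2 =
     Q * K ^+ 2 - 2 * a * K + b.
    by field.
  done.
have bs : b <= (K - 1) * a by rewrite /K addrK.
nra.
Qed.

Lemma ker_vec E : E^T = E -> E \notin unitmx -> exists x, x != 0 /\ E *m x = 0.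
Proof.
move=> Es Eu.
have /det0P [v v0 vE] : \det E == 0.
  by move: Eu; rewrite unitmxE unitfE negbK.
exists v^T; split.
  by apply: contra v0 => /eqP h; apply/eqP; rewrite -(trmxK v) h trmx0.
by rewrite -Es -trmx_mul vE trmx0.
Qed.

Lemma q_ker E x : E^T = E -> E *m x = 0 -> forall A, bil (A + E) x x = bil A x x.
Proof.
move=> Es Ex A; rewrite bilD; have -> : bil E x x = 0 by rewrite /bil -mulmxA Ex mulmx0 mxE.
by rewrite addr0.
Qed.

Lemma q_cvg (T : Type) (F : set_system T) {FF : Filter F} (f : T -> 'M[R]_n) M x :
  mcvg F f M -> (fun u => q (f u) x) @ F --> q M x.
Proof.
move=> Hf.
have H := mcvgM (mcvgM (mcvgC (M:=x^T)) Hf) (mcvgC (M:=x)).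
exact: H 0 0.
Qed.

Lemma q_der (f : R -> 'M[R]_n) Df t x :
  dmx f Df t -> is_derive t 1 (fun u => q (f u) x) (q Df x).
Proof.
move=> Hf.
have H := dmxM (dmxM (dmxC x^T t) Hf) (dmxC x t) 0 0.
apply: (isd_eq H).
by rewrite !mul0mx !mulmx0 add0r addr0.
Qed.

Lemma sa_cvg (T : Type) (F : set_system T) {FF : Filter F} (f : T -> 'M[R]_n) M :
  mcvg F f M -> (fun u => sa (f u - M)) @ F --> 0.
Proof.
move=> Hf.
have -> : (0 : R) = \sum_(i < n) \sum_(j < n) `|(M - M) i j| .
  by rewrite subrr big1 // => i _; rewrite big1 // => j _; rewrite mxE normr0.
apply: cvg_sumfun => i _; apply: cvg_sumfun => j _.
apply: (@cvg_norm R R^o).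
have H := mcvgB Hf (mcvgC (M:=M)).
exact: H i j.
Qed.

Lemma q_lower A M x : q M x - sa (A - M) * nx x <= q A x.
Proof.
have -> : q A x = q M x + q (A - M) x by rewrite /q -bilD addrC subrK.
rewrite lerD2l lerNl.
by apply: le_trans (q_bound _ _); rewrite -normrN ler_norm.
Qed.

End C.


Local Open Scope classical_set_scope.
Set Implicit Arguments. Unset Strict Implicit.

Section D.
Variable R : realType.

Lemma nearR (t : R) (P : R -> Prop) : (\forall s \near t, P s) ->
  exists2 e : R, 0 < e & forall s, `|s - t| < e -> P s.
Proof.
move=> /nbhs_normP [e /= e0 He]; exists e => // s st.
by apply: He => /=; rewrite distrC.
Qed.

Lemma near_right (t : R) (P : R -> Prop) : (\forall s \near t^'+, P s) ->
  exists2 e : R, 0 < e & forall s, t < s -> s < t + e -> P s.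
Proof.
rewrite near_withinE => H; have [e e0 He] := nearR H; exists e => // s ts se.
apply: He => //; rewrite gtr0_norm ?subr_gt0 //.
lra.
Qed.

Lemma near_dn (t : R) (P : R -> Prop) : (\forall s \near t^', P s) ->
  exists2 e : R, 0 < e & forall s, `|s - t| < e -> s != t -> P s.
Proof.
rewrite near_withinE => H; have [e e0 He] := nearR H; exists e => // s se st.
Qed.

Lemma deriv_pos_left (h : R -> R) (t d : R) : is_derive t 1 h d -> 0 < d ->
  exists2 e : R, 0 < e & forall s, t - e < s -> s < t -> h s < h t.
Proof.
move=> Hd d0.
have Hq : (fun u : R => u^-1 *: ((h \o shift t) (u *: 1) - h t)) @ 0^' --> d.
  rewrite -(@derive_val _ _ _ _ _ _ _ Hd).
  exact: (@ex_derive _ _ _ _ _ _ _ Hd).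
have H : \forall u \near (0:R)^', 0 < u^-1 *: ((h \o shift t) (u *: 1) - h t).
  exact: (@cvgr_gt R _ _ _ _ _ Hq).
have [e e0 He] := near_dn H; exists e => // s se st.
have ds : s - t != 0 by rewrite subr_eq0 lt_eqF.
have h1 : `|s - t - 0| < e by rewrite subr0 ltr0_norm ?subr_lt0 //; lra.
have := He (s - t) h1 ds.
rewrite /= /GRing.scale /= mulr1 subrK.
rewrite nmulr_rgt0 ?invr_lt0 ?subr_lt0 //.
Qed.


Lemma pick_left (a t e : R) : a < t -> 0 < e ->
  exists s, [/\ a < s, s < t & t - e < s].
Proof.
move=> hat e0; case: (ltrP e (t - a)) => h.
  by exists (t - e / 2); split; lra.
by exists ((a + t) / 2); split; lra.
Qed.

Lemma ge0_eps (y K : R) : 0 <= K -> (forall e, 0 < e -> 0 <= y + e * K) -> 0 <= y.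
Proof.
move=> K0 H; rewrite leNgt; apply/negP => y0.
have K1 : 0 < K + 1 by lra.
have e0 : 0 < - y / (K + 1) by apply: divr_gt0; lra.
have := H _ e0.
have -> : y + - y / (K + 1) * K = y / (K + 1).
  by field; lra.
by rewrite leNgt pmulr_llt0 ?invr_gt0 // y0.
Qed.

Lemma dmxZc m p (c : R -> R) (dc : R) (M : 'M[R]_(m,p)) (t : R) :
  is_derive t 1 c dc -> dmx (fun u => c u *: M) (dc *: M) t.
Proof.
move=> Hc i j; rewrite mxE.
have -> : (fun u => (c u *: M) i j) = (fun u => c u * M i j).
  by apply/funext => u; rewrite mxE.
apply: (isd_eq (isdM Hc (isdC (M i j) t))).
by rewrite mulr0 add0r mulrC.
Qed.

End D.


Local Open Scope classical_set_scope.
Set Implicit Arguments. Unset Strict Implicit.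

Section E.
Variable R : realType.
Variable n : nat.

Lemma cmp (D A : R -> 'M[R]_n) (D0 : 'M[R]_n) (a b c : R) :
  a < b ->
  (forall s, a < s -> s <= b -> (D s)^T = D s) ->
  (forall s, a < s -> s <= b -> dmx D ((A s)^T *m D s + D s *m A s) s) ->
  (forall s, a < s -> s <= b -> sa (A s) <= c) ->
  mcvg (at_right a) D D0 -> (forall x, 0 <= q D0 x) ->
  forall x, 0 <= q (D b) x.
Proof.
move=> ab Dsym Dder Abnd Dlim D0psd.
have bb : b <= b by [].
have c0 : 0 <= c by apply: le_trans (sa_ge0 _) (Abnd b ab bb).
pose k := 2 * c + 1.
have k0 : 0 < k by rewrite /k; lra.
pose g t := expR (k * t).
have g0 : forall t, 0 < g t by move=> t; exact: expR_gt0.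
suff main : forall eps, 0 < eps -> forall x, 0 <= q (D b) x + eps * g b * nx x.
  move=> x; apply: (@ge0_eps _ _ (g b * nx x)).
    by apply: mulr_ge0; [exact: ltW|exact: nx_ge0].
  by move=> e e0; rewrite mulrA; exact: main.
move=> eps eps0.
pose E t := D t + (eps * g t) *: (1%:M : 'M[R]_n).
have qE : forall t x, q (E t) x = q (D t) x + eps * g t * nx x.
  by move=> t x; rewrite /q /E bilD bilZ bil1.
suff: forall x, 0 <= q (E b) x by move=> H x; rewrite -qE.
apply: contrapT => /existsNP [x0 Hx0].
have Hx0' : q (E b) x0 < 0 by rewrite ltNge; apply/negP.
pose Bs := [set t | a < t /\ t <= b /\ exists x, q (E t) x < 0].
have Bb : Bs b by split => //; split => //; exists x0.
have Blb : lbound Bs a by move=> t [+ _]; exact: ltW.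
have Binf : has_inf Bs by split; [exists b|exists a].
set tau := inf Bs.
have tau_le : forall t, Bs t -> tau <= t by move=> t Bt; exact: (ge_inf Binf.2).
have tau_b : tau <= b by exact: tau_le.
have Hnear_a : \forall s \near a^'+, forall x, 0 <= q (E s) x.
  have Hsa : (fun u => sa (D u - D0)) @ a^'+ --> 0 by exact: sa_cvg.
  have ga0 : 0 < eps * g a by apply: mulr_gt0.
  near=> s.
  have sa_lt : sa (D s - D0) < eps * g a.
    near: s. exact: (@cvgr_lt R _ _ _ _ _ Hsa _ ga0).
  have as_ : a < s.
    near: s. exact: nbhs_right_gt.
  move=> x.
  have gas : g a <= g s by rewrite /g ler_expR ler_pM2l //; exact: ltW.
  have nx0 := nx_ge0 x.
  have h1 := q_lower (D s) D0 x.
  have h2 := D0psd x.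
  have h3 : eps * g a * nx x <= eps * g s * nx x.
    by apply: ler_wpM2r => //; apply: ler_wpM2l => //; exact: ltW.
  have h4 : sa (D s - D0) * nx x <= eps * g a * nx x.
    by apply: ler_wpM2r => //; exact: ltW.
  rewrite qE; lra.
have [d0 d0pos Hd0] := near_right Hnear_a.
have a_tau : a < tau.
  have : a + d0 <= tau.
    apply: lb_le_inf; first by exists b.
    move=> t [at_ [tb [x Hx]]]; rewrite leNgt; apply/negP => tlt.
    by have := Hd0 t at_ tlt x; lra.
  lra.
have below : forall s, a < s -> s < tau -> forall x, 0 <= q (E s) x.
  move=> s as_ st x; rewrite leNgt; apply/negP => Hx.
  have : tau <= s by apply: tau_le; split => //; split; [lra|exists x].
  lra.
have Eder : forall s, a < s -> s <= b ->
    dmx E ((A s)^T *m D s + D s *m A s + (eps * (k * g s)) *: (1%:M : 'M[R]_n)) s.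
  move=> s as_ sb.
  apply: dmxD; first exact: Dder.
  apply: dmxZc.
  apply: (isd_eq (isdM (isdC eps s) (is_derive_expRk k s))).
  by rewrite mulr0 addr0.
have Etau_der := Eder tau a_tau tau_b.
have Etau_psd : forall x, 0 <= q (E tau) x.
  move=> x; rewrite leNgt; apply/negP => Hx.
  have Hc : (fun u => q (E u) x) @ tau --> q (E tau) x by exact: (q_cvg (dmx_cont Etau_der)).
  have : \forall s \near tau, q (E s) x < 0 by apply: (@cvgr_lt R _ _ _ _ _ Hc).
  move=> H; have [e e0 He] := nearR H.
  have [s [as_ st tes]] := pick_left a_tau e0.
  have := below s as_ st x.
  have Hs : `|s - tau| < e by rewrite ltr0_norm ?subr_lt0 //; lra.
  have := He s Hs; lra.
have Esym : (E tau)^T = E tau.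
  by rewrite /E linearD /= Dsym // linearZ /= tr_scalar_mx.
case: (boolP (E tau \in unitmx)) => Hu.
  set K := sa (invmx (E tau)) + 1.
  have K0 : 0 < K by rewrite /K ltr_wpDl // sa_ge0.
  have Hpd := pd_unit Esym Etau_psd Hu.
  have Hs : (fun u => sa (E u - E tau)) @ tau --> 0 by exact: (sa_cvg (dmx_cont Etau_der)).
  have : \forall s \near tau, sa (E s - E tau) < K^-1.
    by apply: (@cvgr_lt R _ _ _ _ _ Hs); rewrite invr_gt0.
  move=> H; have [e e0 He] := nearR H.
  have [t' Bt' t'lt] := inf_adherent e0 Binf.
  have tau_t' := tau_le t' Bt'.
  case: Bt' => at' [t'b [x Hx]].
  have Hsa : sa (E t' - E tau) < K^-1 by apply: He; rewrite ger0_norm; lra.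
  have nx0 := nx_ge0 x.
  have h1 := q_lower (E t') (E tau) x.
  have h2 : K^-1 * nx x <= q (E tau) x.
    by rewrite mulrC ler_pdivrMr // mulrC; exact: Hpd.
  have h3 : sa (E t' - E tau) * nx x <= K^-1 * nx x.
    by apply: ler_wpM2r => //; exact: ltW.
  lra.
have [x [x0n Ex]] := ker_vec Esym Hu.
have Hder := q_der x Etau_der.
have nxp := nx_gt0 x0n.
have Dx : D tau *m x = - (eps * g tau) *: x.
  have -> : D tau = E tau - (eps * g tau) *: 1%:M by rewrite /E addrK.
  by rewrite mulmxBl Ex sub0r -scalemxAl mul1mx scaleNr.
have xD : x^T *m D tau = - (eps * g tau) *: x^T.
  by rewrite -(Dsym tau a_tau tau_b) -trmx_mul Dx linearZ.
have val : q ((A tau)^T *m D tau + D tau *m A tau +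
              (eps * (k * g tau)) *: (1%:M : 'M[R]_n)) x =
           eps * g tau * (k * nx x - 2 * bil (A tau) x x).
  rewrite /q !bilD bilZ bil1.
  have -> : bil ((A tau)^T *m D tau) x x = - (eps * g tau) * bil (A tau) x x.
    rewrite /bil -!mulmxA Dx -!scalemxAr mxE !mulmxA; congr (_ * _); exact: (bilT (A tau) x x).
  have -> : bil (D tau *m A tau) x x = - (eps * g tau) * bil (A tau) x x.
    by rewrite /bil mulmxA xD -!scalemxAl mxE.
  ring.
have hA : bil (A tau) x x <= c * nx x.
  apply: le_trans (ler_norm _) _; apply: le_trans (bil_bound _ _) _.
  by apply: ler_wpM2r; [exact: nx_ge0|exact: Abnd].
have dpos : 0 < q ((A tau)^T *m D tau + D tau *m A tau +
              (eps * (k * g tau)) *: (1%:M : 'M[R]_n)) x.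
  rewrite val; apply: mulr_gt0; first exact: mulr_gt0.
  rewrite /k; lra.
have [e e0 He] := deriv_pos_left Hder dpos.
have [s [as_ st tes]] := pick_left a_tau e0.
have := He s tes st.
have -> : q (E tau) x = 0.
  by rewrite /q /bil -mulmxA Ex mulmx0 mxE.
have := below s as_ st x.
lra.
Unshelve. all: by end_near.
Qed.

End E.


Local Open Scope classical_set_scope.
Set Implicit Arguments. Unset Strict Implicit.

Section F.
Variable R : realType.
Variable n : nat.
Implicit Types (M N Z : 'M[R]_n).

Definition fi M N : R := \sum_i \sum_j M i j * N i j.
Definition fn M : R := fi M M.

Lemma fn_ge0 M : 0 <= fn M.
Proof. by apply: sumr_ge0 => i _; apply: sumr_ge0 => j _; rewrite -expr2 sqr_ge0. Qed.

Lemma sq_le_fn M i j : M i j ^+ 2 <= fn M.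
Proof.
rewrite /fn /fi (bigD1 i) //= (bigD1 j) //= -expr2 -addrA lerDl.
apply: addr_ge0.
  by apply: sumr_ge0 => k _; rewrite -expr2 sqr_ge0.
by apply: sumr_ge0 => l _; apply: sumr_ge0 => k _; rewrite -expr2 sqr_ge0.
Qed.

Lemma absMM M i j k l : `|M i j * M k l| <= fn M.
Proof.
rewrite normrM.
wlog H : i j k l / `|M i j| <= `|M k l|.
  move=> W; case: (lerP `|M i j| `|M k l|) => h; first exact: W.
  by rewrite mulrC; apply: W; exact: ltW.
apply: le_trans (sq_le_fn M k l).
rewrite -real_normK ?num_real // expr2.
by apply: ler_wpM2r.
Qed.

Lemma fn_eq0 M : fn M = 0 -> M = 0.
Proof.
move=> H; apply/matrixP => i j; rewrite mxE.
apply/eqP; rewrite -sqrf_eq0; apply/eqP/le_anti.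
by rewrite sqr_ge0 andbT -H sq_le_fn.
Qed.

Lemma fi_abs Z X : `|fi Z X| <= \sum_i \sum_j `|Z i j * X i j|.
Proof.
apply: le_trans (ler_norm_sum _ _ _) _.
apply: ler_sum => i _; exact: ler_norm_sum.
Qed.

Lemma fi_bound1 Z A : `|fi Z (Z *m A)| <= (sa A * fn Z) *+ n.
Proof.
apply: le_trans (fi_abs _ _) _.
have -> : (sa A * fn Z) *+ n = \sum_(i < n) \sum_(j < n) \sum_(k < n) `|A k j| * fn Z.
  rewrite sumr_const card_ord /sa mulr_suml.
  under eq_bigr do rewrite mulr_suml.
  by rewrite exchange_big.
apply: ler_sum => i _; apply: ler_sum => j _.
rewrite mxE mulr_sumr.
apply: le_trans (ler_norm_sum _ _ _) _.
apply: ler_sum => k _.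
rewrite mulrA normrM mulrC.
by apply: ler_wpM2l => //; exact: absMM.
Qed.

Lemma fi_bound2 Z B : `|fi Z (B *m Z)| <= (sa B * fn Z) *+ n.
Proof.
apply: le_trans (fi_abs _ _) _.
have -> : (sa B * fn Z) *+ n = \sum_(j < n) \sum_(i < n) \sum_(k < n) `|B i k| * fn Z.
  rewrite sumr_const card_ord /sa mulr_suml.
  by under eq_bigr do rewrite mulr_suml.
rewrite exchange_big /=.
apply: ler_sum => j _; apply: ler_sum => i _.
rewrite mxE mulr_sumr.
apply: le_trans (ler_norm_sum _ _ _) _.
apply: ler_sum => k _.
rewrite mulrCA normrM.
by apply: ler_wpM2l => //; exact: absMM.
Qed.

Lemma fiD Z M N : fi Z (M + N) = fi Z M + fi Z N.
Proof.
rewrite /fi -big_split; apply: eq_bigr => i _; rewrite -big_split.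
by apply: eq_bigr => j _; rewrite mxE mulrDr.
Qed.

Lemma fn_der (f : R -> 'M[R]_n) Df t :
  dmx f Df t -> is_derive t 1 (fun u => fn (f u)) (2 * fi (f t) Df).
Proof.
move=> Hf.
apply: (isd_eq (is_derive_sumfun _ (fun i => is_derive_sumfun _ (fun j => isdM (Hf i j) (Hf i j))))).
rewrite /fi mulr_sumr; apply: eq_bigr => i _; rewrite mulr_sumr; apply: eq_bigr => j _.
by rewrite mulrC -mulr2n mulr_natl.
Qed.

Lemma fn_cvg (T : Type) (F : set_system T) {FF : Filter F} (f : T -> 'M[R]_n) :
  mcvg F f 0 -> (fun u => fn (f u)) @ F --> 0.
Proof.
move=> Hf.
have -> : (0 : R) = \sum_(i < n) \sum_(j < n) (0 : 'M[R]_n) i j * (0 : 'M[R]_n) i j.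
  by rewrite big1 // => i _; rewrite big1 // => j _; rewrite mxE mul0r.
apply: cvg_sumfun => i _; apply: cvg_sumfun => j _.
by apply: cvgM; exact: Hf.
Qed.

End F.


Local Open Scope classical_set_scope.
Set Implicit Arguments. Unset Strict Implicit.

Section G.
Variable R : realType.
Variable n : nat.

Lemma pick_right (a t e : R) : a < t -> 0 < e ->
  exists s, [/\ a < s, s < t & s < a + e].
Proof.
move=> hat e0; case: (ltrP e (t - a)) => h.
  by exists (a + e / 2); split; lra.
by exists ((a + t) / 2); split; lra.
Qed.

Lemma grz (Z A B : R -> 'M[R]_n) (a b c : R) :
  a < b ->
  (forall s, a < s -> s <= b -> dmx Z (B s *m Z s + Z s *m A s) s) ->
  (forall s, a < s -> s <= b -> sa (A s) <= c) ->
  (forall s, a < s -> s <= b -> sa (B s) <= c) ->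
  mcvg (at_right a) Z 0 ->
  Z b = 0.
Proof.
move=> ab Zder Abnd Bbnd Zlim.
have bb : b <= b by [].
have c0 : 0 <= c by apply: le_trans (sa_ge0 _) (Abnd b ab bb).
pose L := 4 * c * n%:R.
have L0 : 0 <= L by rewrite /L; apply: mulr_ge0 => //; lra.
pose g t := expR (- L * t).
have g0 : forall t, 0 < g t by move=> t; exact: expR_gt0.
pose psi t := fn (Z t) * g t.
have psi_der : forall s, a < s -> s <= b ->
    is_derive s 1 psi (fn (Z s) * (- L * g s) + g s * (2 * fi (Z s) (B s *m Z s + Z s *m A s))).
  move=> s as_ sb.
  exact: (isdM (fn_der (Zder s as_ sb)) (is_derive_expRk (- L) s)).
have psi_neg : forall s, a < s -> s <= b ->
    fn (Z s) * (- L * g s) + g s * (2 * fi (Z s) (B s *m Z s + Z s *m A s)) <= 0.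
  move=> s as_ sb.
  have f0 := fn_ge0 (Z s).
  have h1 := fi_bound1 (Z s) (A s).
  have h2 := fi_bound2 (Z s) (B s).
  rewrite -mulr_natl in h1; rewrite -mulr_natl in h2.
  have n0 : 0 <= (n%:R : R) by [].
  have h3 : n%:R * (sa (A s) * fn (Z s)) <= n%:R * (c * fn (Z s)).
    by apply: ler_wpM2l => //; apply: ler_wpM2r => //; exact: Abnd.
  have h4 : n%:R * (sa (B s) * fn (Z s)) <= n%:R * (c * fn (Z s)).
    by apply: ler_wpM2l => //; apply: ler_wpM2r => //; exact: Bbnd.
  have h5 : fi (Z s) (B s *m Z s + Z s *m A s) <= L / 2 * fn (Z s).
    rewrite fiD.
    have := ler_norm (fi (Z s) (B s *m Z s)).
    have := ler_norm (fi (Z s) (Z s *m A s)).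
    rewrite /L; lra.
  have gs := g0 s.
  have : g s * (2 * fi (Z s) (B s *m Z s + Z s *m A s)) <= g s * (L * fn (Z s)).
    by apply: ler_wpM2l; [exact: ltW|lra].
  lra.
have mono : forall s, a < s -> s < b -> psi b <= psi s.
  move=> s as_ sb.
  have sbW : s <= b by exact: ltW.
  apply: (@ler0_derive1_le_cc R psi s b).
  - move=> x; rewrite in_itv /= => /andP [sx xb].
    by case: (psi_der x ltac:(lra) ltac:(lra)).
  - move=> x; rewrite in_itv /= => /andP [sx xb].
    have Hd := psi_der x ltac:(lra) ltac:(lra).
    by rewrite derive1E (@derive_val _ _ _ _ _ _ _ Hd); apply: psi_neg; lra.
  - apply: derivable_within_continuous => x; rewrite in_itv /= => /andP [sx xb].
    by case: (psi_der x ltac:(lra) ltac:(lra)).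
  - by rewrite in_itv /= lexx sbW.
  - by rewrite in_itv /= lexx sbW.
  - exact: sbW.
have Hlim : (fun u => fn (Z u)) @ a^'+ --> 0 by exact: fn_cvg.
have key : forall e, 0 < e -> 0 <= - psi b + e * g a.
  move=> e e0.
  have : \forall s \near a^'+, fn (Z s) < e by apply: (@cvgr_lt R _ _ _ _ _ Hlim).
  move=> H; have [d d0 Hd] := near_right H.
  have [s [as_ sb sd]] := pick_right ab d0.
  have h1 := mono s as_ sb.
  have h2 := Hd s as_ sd.
  have h3 : g s <= g a.
    by rewrite /g ler_expR !mulNr lerN2; apply: ler_wpM2l => //; exact: ltW.
  have h4 : psi s <= e * g a.
    rewrite /psi; apply: le_trans (_ : fn (Z s) * g a <= _).
      by apply: ler_wpM2l => //; exact: fn_ge0.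
    by apply: ler_wpM2r; [exact: ltW|exact: ltW].
  lra.
have := ge0_eps (ltW (g0 a)) key.
rewrite oppr_ge0 => hp.
have hb : fn (Z b) = 0.
  apply/le_anti; rewrite fn_ge0 andbT.
  by rewrite -(pmulr_lle0 _ (g0 b)).
exact: fn_eq0.
Qed.

End G.


Local Open Scope classical_set_scope.
Set Implicit Arguments. Unset Strict Implicit.

Section H.
Variable R : realType.

Lemma bnd_itv (f : R -> R) (a b l : R) : a < b ->
  (forall s, a < s -> s <= b -> f x @[x --> s] --> f s) ->
  f x @[x --> a^'+] --> l ->
  exists c, forall s, a < s -> s <= b -> f s <= c.
Proof.
move=> ab fc fl.
have : \forall s \near a^'+, f s < l + 1 by apply: (@cvgr_lt R _ _ _ _ _ fl); lra.
move=> H; have [d d0 Hd] := near_right H.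
have [s0 [as0 s0b s0d]] := pick_right ab d0.
have s0bW : s0 <= b by exact: ltW.
have cont : {within `[s0, b], continuous f}.
  apply: continuous_in_subspaceT => x; rewrite inE /= in_itv /= => /andP [h1 h2].
  apply: fc; lra.
have [cm cmi Hcm] := EVT_max s0bW cont.
exists (`|l| + 1 + `|f cm|) => s as_ sb.
have h1 := ler_norm (f cm); have h2 := ler_norm l.
have h3 := normr_ge0 (f cm); have h6 := normr_ge0 l.
case: (ltrP s s0) => hs.
  have h4 := Hd s as_ ltac:(lra); lra.
have := Hcm s; rewrite in_itv /= hs sb => /(_ isT) h5; lra.
Qed.

Lemma sa_cont n (T : Type) (F : set_system T) {FF : Filter F} (f : T -> 'M[R]_n) M :
  mcvg F f M -> (fun u => sa (f u)) @ F --> sa M.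
Proof.
move=> Hf; apply: cvg_sumfun => i _; apply: cvg_sumfun => j _.
exact: (@cvg_norm R R^o).
Qed.

Lemma bnd_mx n (f : R -> 'M[R]_n) (a b : R) (M0 : 'M[R]_n) : a < b ->
  (forall s, a < s -> s <= b -> mcvg (nbhs s) f (f s)) ->
  mcvg (at_right a) f M0 ->
  exists c, forall s, a < s -> s <= b -> sa (f s) <= c.
Proof.
move=> ab fc fl.
apply: (@bnd_itv (fun s => sa (f s)) a b (sa M0)) => //.
  by move=> s as_ sb; apply: sa_cont; exact: fc.
exact: sa_cont.
Qed.

End H.


Local Open Scope classical_set_scope.
Set Implicit Arguments. Unset Strict Implicit.

Section I.
Variable R : realType.

Lemma quot_is_derive (f : R -> R) (s l : R) :
  (fun h : R => h^-1 * (f (h + s) - f s)) @ 0^' --> l -> is_derive s 1 f l.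
Proof.
move=> H.
have H' : (fun h : R => h^-1 *: ((f \o shift s) (h *: 1) - f s)) @ 0^' --> l.
  apply: (cvg_trans _ H); apply: near_eq_cvg; near=> h => /=.
  by rewrite /GRing.scale /= mulr1.
apply: DeriveDef; first exact: (cvgP _ H').
by rewrite /derive; apply: cvg_lim.
Unshelve. all: by end_near.
Qed.

Lemma is_derive_quot (f : R -> R) (s l : R) : is_derive s 1 f l ->
  (fun h : R => h^-1 * (f (h + s) - f s)) @ 0^' --> l.
Proof.
move=> Hd.
have Hq : (fun u : R => u^-1 *: ((f \o shift s) (u *: 1) - f s)) @ 0^' --> l.
  rewrite -(@derive_val _ _ _ _ _ _ _ Hd).
  exact: (@ex_derive _ _ _ _ _ _ _ Hd).
apply: (cvg_trans _ Hq); apply: near_eq_cvg; near=> h => /=.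
by rewrite /GRing.scale /= mulr1.
Unshelve. all: by end_near.
Qed.

Lemma shift0 (T : Type) (f : R -> T) (s : R) (F : set_system T) :
  f x @[x --> s] --> F -> f (h + s) @[h --> 0^'] --> F.
Proof.
move=> H.
have : (f \o shift s) x @[x --> (0 : R)] --> F by rewrite cvg_comp_shift add0r.
move=> H2; exact: (cvg_within_filter _ H2).
Qed.


Lemma inv_diff n (P Q : 'M[R]_n) : P \in unitmx -> Q \in unitmx ->
  invmx P - invmx Q = - (invmx P *m (P - Q) *m invmx Q).
Proof.
move=> Pu Qu.
rewrite mulmxBr mulVmx // mulmxBl mul1mx -mulmxA mulmxV // mulmx1.
by rewrite opprB.
Qed.

Lemma dmx_inv n (V : R -> 'M[R]_n) U s :
  dmx V U s -> (\forall u \near s, V u \in unitmx) ->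
  dmx (fun u => invmx (V u)) (- (invmx (V s) *m U *m invmx (V s))) s.
Proof.
move=> HV Hu i j.
apply: quot_is_derive.
have Vs : V s \in unitmx by exact: (nbhs_singleton Hu).
have Wc : mcvg (nbhs s) (fun u => invmx (V u)) (invmx (V s)).
  exact: (mcvg_inv (dmx_cont HV) Vs).
have Wsh : mcvg 0^' (fun h => invmx (V (h + s))) (invmx (V s)).
  by move=> k l; exact: (shift0 (Wc k l)).
have Qv : mcvg 0^' (fun h : R => h^-1 *: (V (h + s) - V s)) U.
  move=> k l; apply: (cvg_trans _ (is_derive_quot (HV k l))).
  apply: near_eq_cvg; near=> h.
  by rewrite !mxE.
have Mc : mcvg 0^' (fun h : R => - (invmx (V (h + s)) *m (h^-1 *: (V (h + s) - V s)) *m invmx (V s)))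
    (- (invmx (V s) *m U *m invmx (V s))).
  apply: mcvgN; apply: mcvgM; [exact: mcvgM|exact: mcvgC].
have Mij := Mc i j; simpl in Mij.
have [e e0 He] := nearR Hu.
apply: (cvg_trans _ Mij); apply: near_eq_cvg; near=> h.
have hu : V (h + s) \in unitmx.
  apply: He; rewrite addrK.
  near: h; exact: dnbhs0_lt.
have -> : - (invmx (V (h + s)) *m (h^-1 *: (V (h + s) - V s)) *m invmx (V s)) =
  h^-1 *: (invmx (V (h + s)) - invmx (V s)).
  by rewrite inv_diff // -scalemxAr -scalemxAl scalerN.
by rewrite !mxE.
Unshelve. all: by end_near.
Qed.

End I.


Set Implicit Arguments. Unset Strict Implicit.

Ltac mxring :=
  rewrite ?(mulmxDl, mulmxDr, mulmxBl, mulmxBr, mulmxN, mulNmx, mulmxA);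
  apply/matrixP => ? ?; rewrite !mxE; ring.

Section K.
Variable R : realType.
Variable n : nat.
Implicit Types (P W V Q U : 'M[R]_n).

Lemma mK m P (B : 'M[R]_(m,n)) : P \in unitmx -> B *m P *m invmx P = B.
Proof. by move=> Pu; rewrite -mulmxA mulmxV // mulmx1. Qed.

Lemma mKV m P (B : 'M[R]_(m,n)) : P \in unitmx -> B *m invmx P *m P = B.
Proof. by move=> Pu; rewrite -mulmxA mulVmx // mulmx1. Qed.

Lemma idI1 P (G1 G2 : 'M[R]_n) Q : P \in unitmx ->
  - (invmx P *m (- (G1 *m P) - P *m G1^T - Q - P *m G2 *m P) *m invmx P) =
  invmx P *m G1 + G1^T *m invmx P + invmx P *m Q *m invmx P + G2.
Proof.
move=> Pu.
rewrite ?(mulmxDl, mulmxDr, mulmxBl, mulmxBr, mulmxN, mulNmx, mulmxA).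
rewrite ?(mK _ Pu, mulVmx Pu, mul1mx).
apply/matrixP => ? ?; rewrite !mxE; ring.
Qed.

Lemma idI2 W (G1 G2 : 'M[R]_n) Q : Q^T = Q -> G2^T = G2 ->
  (W *m G1 + G1^T *m W + W *m Q *m W + G2) - (W *m G1 + G1^T *m W + W *m Q *m W + G2)^T
  = (G1^T + W^T *m Q) *m (W - W^T) + (W - W^T) *m (G1 + Q *m W).
Proof. move=> HQ HG; rewrite !linearD /= !trmx_mul !trmxK HQ HG; mxring. Qed.

Lemma idI4 V (G1 G2 : 'M[R]_n) Q : Q^T = Q -> G2^T = G2 ->
  (- (G1 *m V) - V *m G1^T - Q - V *m G2 *m V) -
  (- (G1 *m V) - V *m G1^T - Q - V *m G2 *m V)^T =
  - (G1 + V^T *m G2) *m (V - V^T) + (V - V^T) *m - (G1^T + G2 *m V).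
Proof. move=> HQ HG; rewrite !linearB !linearN /= !trmx_mul !trmxK HQ HG; mxring. Qed.

Lemma idUsym V (G1 G2 : 'M[R]_n) Q : V^T = V -> Q^T = Q -> G2^T = G2 ->
  (- (G1 *m V) - V *m G1^T - Q - V *m G2 *m V)^T = - (G1 *m V) - V *m G1^T - Q - V *m G2 *m V.
Proof. move=> HV HQ HG; rewrite !linearB !linearN /= !trmx_mul !trmxK HV HQ HG; mxring. Qed.

End K.


Set Implicit Arguments. Unset Strict Implicit.

Section J.
Variable R : realType.
Variable s : seq nat.

Lemma G2_sym : (Gamma2 R s)^T = Gamma2 R s.
Proof.
apply/matrixP => i j; rewrite !mxE.
by rewrite eq_sym; case: (box_pos s i == 0)%N; case: (box_pos s j == 0)%N; rewrite ?andbT ?andbF.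
Qed.

Lemma G2_diag (i j : 'I_(sumn s)) : i != j -> Gamma2 R s i j = 0.
Proof.
move=> ij; rewrite mxE.
case: (boolP [&& _, _ & _]) => //= /and3P [/eqP hr /eqP hp /eqP hq].
exfalso; move: ij; apply/negP; rewrite negbK; apply/eqP/val_inj => /=.
by rewrite -(reshape_indexK s i) -(reshape_indexK s j) -/(box_row s i) -/(box_pos s i)
  -/(box_row s j) -/(box_pos s j) hr hp hq.
Qed.

Lemma G2_psd x : 0 <= q (Gamma2 R s) x.
Proof.
rewrite /q bilE; apply: sumr_ge0 => i _.
rewrite (bigD1 i) //= big1 ?addr0.
  rewrite mulrAC -expr2 mulr_ge0 ?sqr_ge0 //.
  by rewrite mxE ler0n.
by move=> j ij; rewrite G2_diag 1?eq_sym // mulr0 mul0r.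
Qed.

End J.

Local Open Scope classical_set_scope.
Section J2.
Variable R : realType.

Lemma near_open (a b u : R) : a < u -> u < b -> \forall v \near u, a < v /\ v < b.
Proof.
move=> au ub; apply/nbhs_normP.
case: (ltrP (u - a) (b - u)) => h.
  exists (u - a) => /=; first lra.
  move=> v /= hv; rewrite ltr_norml in hv; case/andP: hv => h1 h2; split; lra.
exists (b - u) => /=; first lra.
move=> v /= hv; rewrite ltr_norml in hv; case/andP: hv => h1 h2; split; lra.
Qed.

Lemma mcvg_right m p (f : R -> 'M[R]_(m,p)) a M :
  mcvg (nbhs a) f M -> mcvg a^'+ f M.
Proof. by move=> H i j; apply: cvg_at_right_filter; exact: H. Qed.

Lemma mcvg_eq m p (T : Type) (F : set_system T) (f : T -> 'M[R]_(m,p)) M M' :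
  mcvg F f M -> M = M' -> mcvg F f M'.
Proof. by move=> ? <-. Qed.

End J2.


End Helpers.
Import Helpers.
Unset Implicit Arguments.
Set Strict Implicit.
Local Open Scope ring_scope.

Theorem lemma4p14 (R : realType) (s : seq nat) (Hs : young_diagram s)
    (Q : 'M[R]_(sumn s)) (HQ : Q^T = Q)
    (T : \bar R) (V : R -> 'M[R]_(sumn s)) :
  riccati_maximal Q T V ->
  forall t : R, 0 < t -> (t%:E < T)%E -> nsd (mxderiv V t).
Proof.
move=> [[T0 [Hode [Hunit Hlim]]] _] t tpos tT.
have G2s := @G2_sym R s.
have G2p : forall x, 0 <= q (Gamma2 R s) x := @G2_psd R s.
set G1 := Gamma1 R s in Hode *.
set G2 := Gamma2 R s in Hode G2s G2p *.
pose U u := - (G1 *m V u) - V u *m G1^T - Q - V u *m G2 *m V u.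
have Vder : forall u, 0 < u -> (u%:E < T)%E -> dmx V (U u) u.
  move=> u u0 uT i j; have [Hd He] := Hode u u0 uT i j.
  by apply: DeriveDef => //; rewrite -derive1E He.
have Tle : forall u, u <= t -> (u%:E < T)%E.
  by move=> u ut; apply: le_lt_trans tT; rewrite lee_fin.
have -> : mxderiv V t = U t.
  by apply/matrixP => i j; rewrite mxE; exact: (Hode t tpos tT i j).2.
suff main : forall x, q (U t) x <= 0 by move=> x; exact: main.
have [d0 d0pos Hd0] := near_right Hunit.
have [t0 [t00 t0t t0d]] : exists t0, [/\ 0 < t0, t0 <= t & t0 < d0].
  by case: (ltrP t d0) => h; [exists t | exists (d0 / 2)]; split; lra.
pose W u := invmx (V u).
pose X u := W u *m G1 + G1^T *m W u + W u *m Q *m W u + G2.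
have Vu : forall u, 0 < u -> u <= t0 -> V u \in unitmx.
  by move=> u u0 ut0; apply: Hd0 => //; lra.
have nearU : forall u, 0 < u -> u <= t0 -> \forall v \near u, V v \in unitmx.
  move=> u u0 ut0; have H := near_open u0 (ltac:(lra) : u < d0).
  by apply: filterS H => v [v0 vd]; apply: Hd0 => //; lra.
have Wder : forall u, 0 < u -> u <= t0 -> dmx W (X u) u.
  move=> u u0 ut0.
  apply: dmx_eq (dmx_inv (Vder u u0 (Tle u ltac:(lra))) (nearU u u0 ut0)) _.
  exact: (idI1 _ _ _ (Vu u u0 ut0)).
have Wlim : mcvg (0:R)^'+%classic W 0 by move=> i j; rewrite mxE; exact: Hlim.
have Wcont : forall u, 0 < u -> u <= t0 -> mcvg (nbhs u) W (W u).
  by move=> u u0 ut0; exact: (dmx_cont (Wder u u0 ut0)).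
pose Af u := G1 + Q *m W u.
pose Bf u := G1^T + (W u)^T *m Q.
have [cA HcA] : exists c, forall u, 0 < u -> u <= t0 -> sa (Af u) <= c.
  apply: (@bnd_mx _ _ Af 0 t0 G1) => //.
    move=> u u0 ut0; apply: mcvgD; first exact: mcvgC.
    by apply: mcvgM; [exact: mcvgC|exact: Wcont].
  apply: mcvg_eq (mcvgD (mcvgC (M:=G1)) (mcvgM (mcvgC (M:=Q)) Wlim)) _.
  by rewrite mulmx0 addr0.
have [cB HcB] : exists c, forall u, 0 < u -> u <= t0 -> sa (Bf u) <= c.
  apply: (@bnd_mx _ _ Bf 0 t0 G1^T) => //.
    move=> u u0 ut0; apply: mcvgD; first exact: mcvgC.
    by apply: mcvgM; [apply: mcvgT; exact: Wcont|exact: mcvgC].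
  apply: mcvg_eq (mcvgD (mcvgC (M:=G1^T)) (mcvgM (mcvgT Wlim) (mcvgC (M:=Q)))) _.
  by rewrite trmx0 mul0mx addr0.
have cA0 : 0 <= cA by apply: le_trans (sa_ge0 _) (HcA t0 t00 (lexx _)).
have cB0 : 0 <= cB by apply: le_trans (sa_ge0 _) (HcB t0 t00 (lexx _)).
have Wsym : forall u, 0 < u -> u <= t0 -> (W u)^T = W u.
  move=> b b0 bt0.
  have Z0 : (fun u => W u - (W u)^T) b = 0.
    apply: (@grz _ _ (fun u => W u - (W u)^T) Af Bf 0 b (cA + cB)) => //.
    - move=> u u0 ub.
      apply: dmx_eq (dmxB (Wder u u0 ltac:(lra)) (dmxT (Wder u u0 ltac:(lra)))) _.
      exact: idI2.
    - move=> u u0 ub; have := HcA u u0 ltac:(lra); lra.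
    - move=> u u0 ub; have := HcB u u0 ltac:(lra); lra.
    apply: mcvg_eq (mcvgB Wlim (mcvgT Wlim)) _.
    by rewrite trmx0 subr0.
  by move/eqP: Z0; rewrite /= subr_eq0 => /eqP.
have Vsym0 : forall u, 0 < u -> u <= t0 -> (V u)^T = V u.
  move=> u u0 ut0.
  have h : invmx (V u)^T = invmx (V u) by rewrite -trmx_inv; exact: Wsym.
  by rewrite -(invmxK (V u)^T) h invmxK.
have Xsym : forall u, 0 < u -> u <= t0 -> (X u)^T = X u.
  move=> u u0 ut0; rewrite /X !linearD /= !trmx_mul !trmxK (Wsym u u0 ut0) HQ G2s.
  mxring.
have Xder : forall u, 0 < u -> u <= t0 -> dmx X ((Af u)^T *m X u + X u *m Af u) u.
  move=> u u0 ut0.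
  have dW := Wder u u0 ut0.
  apply: dmx_eq (dmxD (dmxD (dmxD (dmxM dW (dmxC G1 u)) (dmxM (dmxC G1^T u) dW))
       (dmxM (dmxM dW (dmxC Q u)) dW)) (dmxC G2 u)) _.
  rewrite /Af [(G1 + _)^T]linearD /= trmx_mul (Wsym u u0 ut0) HQ.
  rewrite ?(mulmx0, mul0mx, addr0, add0r).
  rewrite /X; mxring.
have Xlim : mcvg (0:R)^'+%classic X G2.
  apply: mcvg_eq (mcvgD (mcvgD (mcvgD (mcvgM Wlim (mcvgC (M:=G1))) (mcvgM (mcvgC (M:=G1^T)) Wlim))
      (mcvgM (mcvgM Wlim (mcvgC (M:=Q))) Wlim)) (mcvgC (M:=G2))) _.
  by rewrite !mul0mx !mulmx0 !add0r.
have Xpsd : forall x, 0 <= q (X t0) x.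
  apply: (@cmp _ _ X Af G2 0 t0 cA) => //.
have Ut0 : forall x, 0 <= q (- U t0) x.
  move=> x.
  have e1 : X t0 = - (W t0 *m U t0 *m W t0).
    by rewrite /X /W -(idI1 _ _ _ (Vu t0 t00 (lexx _))).
  have e2 : - U t0 = V t0 *m X t0 *m V t0.
    rewrite e1 mulmxN mulNmx !mulmxA /W mulmxV ?mul1mx ?mKV //; exact: Vu.
  rewrite e2 /q /bil.
  have -> : x^T *m (V t0 *m X t0 *m V t0) *m x = (V t0 *m x)^T *m X t0 *m (V t0 *m x).
    by rewrite trmx_mul (Vsym0 t0 t00 (lexx _)) !mulmxA.
  exact: Xpsd.
have [e|t0lt] : t0 = t \/ t0 < t.
  by case: (ltgtP t0 t) => h; [right|lra|left].
  by move=> x; have := Ut0 x; rewrite e /q bilN; lra.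
have Vcont : forall u, 0 < u -> u <= t -> mcvg (nbhs u) V (V u).
  by move=> u u0 ut; exact: (dmx_cont (Vder u u0 (Tle u ut))).
pose A2 u := - (G1^T + G2 *m V u).
pose B2 u := - (G1 + (V u)^T *m G2).
have A2c : forall u, 0 < u -> u <= t -> mcvg (nbhs u) A2 (A2 u).
  move=> u u0 ut; apply: mcvgN; apply: mcvgD; first exact: mcvgC.
  by apply: mcvgM; [exact: mcvgC|exact: Vcont].
have B2c : forall u, 0 < u -> u <= t -> mcvg (nbhs u) B2 (B2 u).
  move=> u u0 ut; apply: mcvgN; apply: mcvgD; first exact: mcvgC.
  by apply: mcvgM; [apply: mcvgT; exact: Vcont|exact: mcvgC].
have [cA2 HcA2] : exists c, forall u, t0 < u -> u <= t -> sa (A2 u) <= c.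
  apply: (@bnd_mx _ _ A2 t0 t (A2 t0)) => //.
    by move=> u u0 ut; apply: A2c => //; lra.
  by apply: mcvg_right; exact: A2c.
have [cB2 HcB2] : exists c, forall u, t0 < u -> u <= t -> sa (B2 u) <= c.
  apply: (@bnd_mx _ _ B2 t0 t (B2 t0)) => //.
    by move=> u u0 ut; apply: B2c => //; lra.
  by apply: mcvg_right; exact: B2c.
have cA20 : 0 <= cA2 by apply: le_trans (sa_ge0 _) (HcA2 t t0lt (lexx _)).
have cB20 : 0 <= cB2 by apply: le_trans (sa_ge0 _) (HcB2 t t0lt (lexx _)).
have Vsym : forall u, 0 < u -> u <= t -> (V u)^T = V u.
  move=> b b0 bt; case: (lerP b t0) => hb; first exact: Vsym0.
  have Z0 : (fun u => V u - (V u)^T) b = 0.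
    apply: (@grz _ _ (fun u => V u - (V u)^T) A2 B2 t0 b (cA2 + cB2)) => //.
    - move=> u u0 ub.
      have dV := Vder u ltac:(lra) (Tle u ltac:(lra)).
      apply: dmx_eq (dmxB dV (dmxT dV)) _.
      exact: idI4.
    - move=> u u0 ub; have := HcA2 u u0 ltac:(lra); lra.
    - move=> u u0 ub; have := HcB2 u u0 ltac:(lra); lra.
    apply: mcvg_right.
    apply: mcvg_eq (mcvgB (Vcont t0 t00 t0t) (mcvgT (Vcont t0 t00 t0t))) _.
    by rewrite (Vsym0 t0 t00 (lexx _)) subrr.
  by move/eqP: Z0; rewrite /= subr_eq0 => /eqP.
pose D u := - U u.
have Ucont : forall u, 0 < u -> u <= t -> mcvg (nbhs u) U (U u).
  move=> u u0 ut; have Vc := Vcont u u0 ut.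
  apply: mcvgB; last by apply: mcvgM; [apply: mcvgM; [exact: Vc|exact: mcvgC]|exact: Vc].
  apply: mcvgB; last exact: mcvgC.
  apply: mcvgB; last by apply: mcvgM; [exact: Vc|exact: mcvgC].
  by apply: mcvgN; apply: mcvgM; [exact: mcvgC|exact: Vc].
have Dsym : forall u, t0 < u -> u <= t -> (D u)^T = D u.
  move=> u u0 ut; rewrite /D linearN /= /U idUsym //.
  by apply: Vsym => //; lra.
have Dder : forall u, t0 < u -> u <= t -> dmx D ((A2 u)^T *m D u + D u *m A2 u) u.
  move=> u u0 ut.
  have dV := Vder u ltac:(lra) (Tle u ut).
  apply: dmx_eq (dmxN (dmxB (dmxB (dmxB (dmxN (dmxM (dmxC G1 u) dV)) (dmxM dV (dmxC G1^T u)))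
      (dmxC Q u)) (dmxM (dmxM dV (dmxC G2 u)) dV))) _.
  rewrite /A2 [(- _)^T]linearN /= [(G1^T + _)^T]linearD /= trmxK trmx_mul (Vsym u ltac:(lra) ut) G2s.
  rewrite ?(mulmx0, mul0mx, addr0, add0r, subr0, sub0r).
  rewrite /D; mxring.
have Dpsd : forall x, 0 <= q (D t) x.
  apply: (@cmp _ _ D A2 (D t0) t0 t cA2) => //.
  by apply: mcvg_right; apply: mcvgN; exact: Ucont.
by move=> x; have := Dpsd x; rewrite /D /q bilN; lra.
Qed.
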